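(* Assume (S) and let $A_h:U_h\to U_h$ be defined by $\int_{\mathcal O}(A_h\phi_h)\psi_h=\int_{\mathcal O}\nabla\phi_h\cdot\nabla\psi_h$ for all $\psi_h\in U_h$. Then there is a constant $C$ independent of $h$ such that $\|A_h\phi_h\|_{L^2(\mathcal O)}\le C\|\Delta_h\phi_h\|_{L^2(\mathcal O)}$ for all $\phi_h\in U_h$.
   Context: Let $L_x,L_y>0$, $\mathcal O=(0,L_x)\times(0,L_y)$; all functions are $\mathcal O$-periodic. For $h\in(0,1)$ let $h_x=L_x/N_x$, $h_y=L_y/N_y$ with $\hat c_1h\le h_x,h_y\le\hat C_2h$ (Assumption (S)). Nodes are $x_i=(i-1)h_x$ and $y_j=(j-1)h_y$. $U_h$ is the space of continuous periodic functions on $\overline{\mathcal O}$ that are bilinear on each grid rectangle. $\mathcal I_h^x$ and $\mathcal I_h^y$ are nodal piecewise-linear interpolation in $x$ and in $y$ (each acting in its own variable for fixed value of the other), and $\mathcal I_h^{xy}=\mathcal I_h^x\mathcal I_h^y$. The discrete Laplacian $\Delta_h:U_h\to U_h$ is defined by $-\int_{\mathcal O}\mathcal I_h^{xy}(\Delta_h\phi_h\psi_h)=\int_{\mathcal O}\mathcal I_h^y(\partial_x\phi_h\partial_x\psi_h)+\mathcal I_h^x(\partial_y\phi_h\partial_y\psi_h)$ for all $\psi_h\in U_h$. Equivalently, $\Delta_h\phi_h(x,y)=\frac{\phi_h(x+h_x,y)-2\phi_h(x,y)+\phi_h(x-h_x,y)}{h_x^2}+\frac{\phi_h(x,y+h_y)-2\phi_h(x,y)+\phi_h(x,y-h_y)}{h_y^2}$.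 *)

(* Defs.v *)
From Stdlib Require Import Reals Lra.
From Coquelicot Require Import Coquelicot.
Open Scope R_scope.

Definition hx (Lx : R) (Nx : nat) : R := Lx / INR Nx.
Definition hy (Ly : R) (Ny : nat) : R := Ly / INR Ny.

(* U_h : continuous, O-periodic functions that are bilinear on each grid
   rectangle [i hx,(i+1) hx] x [j hy,(j+1) hy] (0 <= i < Nx, 0 <= j < Ny);
   with periodicity these rectangles tile the plane. *)
Definition in_Uh (Lx Ly : R) (Nx Ny : nat) (f : R -> R -> R) : Prop :=
  (forall x y, f (x + Lx) y = f x y) /\
  (forall x y, f x (y + Ly) = f x y) /\
  (forall p : R * R, continuous (fun q : R * R => f (fst q) (snd q)) p) /\
  (forall i j : nat, (i < Nx)%nat -> (j < Ny)%nat ->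
     exists a b c d : R, forall x y,
       INR i * hx Lx Nx <= x <= INR (S i) * hx Lx Nx ->
       INR j * hy Ly Ny <= y <= INR (S j) * hy Ly Ny ->
       f x y = a + b * x + c * y + d * x * y).

Definition integO (Lx Ly : R) (f : R -> R -> R) : R :=
  RInt (fun y => RInt (fun x => f x y) 0 Lx) 0 Ly.

Definition L2normO (Lx Ly : R) (f : R -> R -> R) : R :=
  sqrt (integO Lx Ly (fun x y => f x y ^ 2)).

Definition dX (f : R -> R -> R) (x y : R) : R := Derive (fun t => f t y) x.
Definition dY (f : R -> R -> R) (x y : R) : R := Derive (fun t => f x t) y.

Definition lap_h (Lx Ly : R) (Nx Ny : nat) (f : R -> R -> R) (x y : R) : R :=
  (f (x + hx Lx Nx) y - 2 * f x y + f (x - hx Lx Nx) y) / (hx Lx Nx) ^ 2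
  + (f x (y + hy Ly Ny) - 2 * f x y + f x (y - hy Ly Ny)) / (hy Ly Ny) ^ 2.

Definition is_Ah (Lx Ly : R) (Nx Ny : nat) (phi a : R -> R -> R) : Prop :=
  in_Uh Lx Ly Nx Ny a /\
  forall psi, in_Uh Lx Ly Nx Ny psi ->
    integO Lx Ly (fun x y => a x y * psi x y) =
    integO Lx Ly (fun x y => dX phi x y * dX psi x y + dY phi x y * dY psi x y).

(* Main.v *)
Require Import Defs.
From Stdlib Require Import Reals Lra Lia ZArith FunctionalExtensionality.
From Coquelicot Require Import Coquelicot.
Open Scope R_scope.

Definition quad (Q : R -> R) : Prop :=
  exists c0 c1 c2 : R, forall s, Q s = c0 + c1 * s + c2 * s ^ 2.

Lemma rint_poly (g : R -> R) (x0 x1 c0 c1 c2 : R) :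
  x0 < x1 -> (forall x, x0 < x < x1 -> g x = c0 + c1 * x + c2 * x ^ 2) ->
  ex_RInt g x0 x1 /\
  @eq R (RInt g x0 x1) ((c0 * x1 + c1 * x1 ^ 2 / 2 + c2 * x1 ^ 3 / 3)
                 - (c0 * x0 + c1 * x0 ^ 2 / 2 + c2 * x0 ^ 3 / 3)).
Proof.
  intros Hx Hg.
  assert (H : is_RInt (fun x => c0 + c1 * x + c2 * x ^ 2) x0 x1
     (minus ((fun x => c0 * x + c1 * x ^ 2 / 2 + c2 * x ^ 3 / 3) x1)
            ((fun x => c0 * x + c1 * x ^ 2 / 2 + c2 * x ^ 3 / 3) x0))).
  { apply (is_RInt_derive (fun x => c0 * x + c1 * x ^ 2 / 2 + c2 * x ^ 3 / 3) (fun x => c0 + c1 * x + c2 * x ^ 2)).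
    - intros x _. auto_derive; auto. field.
    - intros x _. apply (ex_derive_continuous (fun x => c0 + c1 * x + c2 * x ^ 2)). auto_derive. auto. }
  assert (H' : is_RInt g x0 x1
     (minus ((fun x => c0 * x + c1 * x ^ 2 / 2 + c2 * x ^ 3 / 3) x1)
            ((fun x => c0 * x + c1 * x ^ 2 / 2 + c2 * x ^ 3 / 3) x0))).
  { eapply is_RInt_ext; [|exact H]. intros x Hx'.
    rewrite Rmin_left in Hx' by lra. rewrite Rmax_right in Hx' by lra.
    symmetry; apply Hg; lra. }
  split. eexists; exact H'.
  rewrite (is_RInt_unique _ _ _ _ H'). reflexivity.
Qed.

Lemma rint_quads (g Q : R -> R) (x0 x1 : R) :
  x0 < x1 -> quad Q ->
  (forall x, x0 < x < x1 -> g x = Q ((x - x0) / (x1 - x0))) ->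
  ex_RInt g x0 x1 /\
  @eq R (RInt g x0 x1) ((x1 - x0) / 6 * (Q 0 + 4 * Q (1/2) + Q 1)).
Proof.
  intros Hx [c0 [c1 [c2 HQ]]] Hg.
  set (h := x1 - x0).
  assert (Hh : h <> 0) by (unfold h; lra).
  destruct (rint_poly g x0 x1 (c0 - c1 * x0 / h + c2 * x0 ^ 2 / h ^ 2)
              (c1 / h - 2 * c2 * x0 / h ^ 2) (c2 / h ^ 2) Hx) as [E1 E2].
  { intros x Hx'. rewrite Hg by auto. rewrite HQ. fold h. field. auto. }
  split; auto. rewrite E2. rewrite !HQ.
  assert (Ex1 : x1 = x0 + h) by (unfold h; ring).
  clearbody h. subst x1. field. auto.
Qed.

Lemma quad_sum_aux (Q1 Q2 : R -> R) : quad Q1 -> quad Q2 -> quad (fun s => Q1 s + Q2 s).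
Proof.
  intros [a0 [a1 [a2 H1]]] [b0 [b1 [b2 H2]]].
  exists (a0+b0), (a1+b1), (a2+b2). intros s; rewrite H1, H2; ring.
Qed.

Lemma quad_scal (c : R) (Q : R -> R) : quad Q -> quad (fun s => c * Q s).
Proof.
  intros [a0 [a1 [a2 H1]]]. exists (c*a0), (c*a1), (c*a2). intros s; rewrite H1; ring.
Qed.

Lemma quad_ext (Q1 Q2 : R -> R) : (forall s, Q1 s = Q2 s) -> quad Q1 -> quad Q2.
Proof.
  intros E [a0 [a1 [a2 H1]]]. exists a0, a1, a2. intros s; rewrite <- E; auto.
Qed.

Lemma quad_affmul (a b c d : R) : quad (fun s => (a + b * s) * (c + d * s)).
Proof. exists (a*c), (a*d + b*c), (b*d). intros s; ring. Qed.

Lemma quad_affine_comp (Q : R -> R) (x0 h : R) : h <> 0 -> quad Q -> quad (fun x => Q ((x - x0)/h)).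
Proof.
  intros Hh [c0 [c1 [c2 HQ]]].
  exists (c0 - c1 * x0 / h + c2 * x0 ^ 2 / h ^ 2), (c1 / h - 2 * c2 * x0 / h ^ 2), (c2 / h ^ 2).
  intros s. rewrite HQ. field. auto.
Qed.

Fixpoint sumN (n : nat) (f : nat -> R) : R :=
  match n with O => 0 | S k => sumN k f + f k end.

Lemma sumN_ext n f g : (forall k, (k < n)%nat -> f k = g k) -> sumN n f = sumN n g.
Proof.
  induction n; simpl; intros H; auto.
  rewrite IHn by (intros; apply H; lia). rewrite H by lia. auto.
Qed.

Lemma sumN_plus n f g : sumN n (fun k => f k + g k) = sumN n f + sumN n g.
Proof. induction n; simpl; [ring|rewrite IHn; ring]. Qed.

Lemma sumN_scal n c f : sumN n (fun k => c * f k) = c * sumN n f.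
Proof. induction n; simpl; [ring|rewrite IHn; ring]. Qed.

Lemma sumN_le n f g : (forall k, (k < n)%nat -> f k <= g k) -> sumN n f <= sumN n g.
Proof.
  induction n; simpl; intros H; [lra|].
  assert (sumN n f <= sumN n g) by (apply IHn; intros; apply H; lia).
  assert (f n <= g n) by (apply H; lia). lra.
Qed.

Lemma quad_sumN n (Q : nat -> R -> R) : (forall k, quad (Q k)) -> quad (fun s => sumN n (fun k => Q k s)).
Proof.
  intros HQ. induction n; simpl.
  - exists 0, 0, 0. intros; ring.
  - apply quad_sum_aux; auto.
Qed.

Lemma rint_cells (g : R -> R) (h : R) (n : nat) : 0 < h ->
  (forall k, (k < n)%nat -> ex_RInt g (INR k * h) (INR (S k) * h)) ->
  ex_RInt g 0 (INR n * h) /\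
  @eq R (RInt g 0 (INR n * h)) (sumN n (fun k => RInt g (INR k * h) (INR (S k) * h))).
Proof.
  intros Hh. induction n; intros Hk.
  - simpl. rewrite Rmult_0_l. split. apply ex_RInt_point. exact (RInt_point 0 g).
  - destruct IHn as [E1 E2]. intros; apply Hk; lia.
    assert (E3 := Hk n (Nat.lt_succ_diag_r n)).
    split. eapply ex_RInt_Chasles; eauto.
    change (sumN (S n) (fun k => RInt g (INR k * h) (INR (S k) * h))) with
      (sumN n (fun k => RInt g (INR k * h) (INR (S k) * h)) + RInt g (INR n * h) (INR (S n) * h)).
    rewrite <- E2. rewrite <- (RInt_Chasles g 0 (INR n * h)); auto.
Qed.

Definition simp1 (Q : R -> R) : R := Q 0 + 4 * Q (1/2) + Q 1.
Definition simp2 (P : R -> R -> R) : R := simp1 (fun t => simp1 (fun s => P s t)).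

Lemma simp1_sumN n (Q : nat -> R -> R) :
  simp1 (fun s => sumN n (fun k => Q k s)) = sumN n (fun k => simp1 (Q k)).
Proof.
  unfold simp1. induction n; simpl. ring. rewrite <- IHn. ring.
Qed.

Lemma intrep (H : R -> R -> R) (P : nat -> nat -> R -> R -> R) (hx hy : R) (Nx Ny : nat) :
  0 < hx -> 0 < hy ->
  (forall i j t, quad (fun s => P i j s t)) ->
  (forall i j s, quad (fun t => P i j s t)) ->
  (forall i j, (i < Nx)%nat -> (j < Ny)%nat -> forall x y,
     INR i * hx < x < INR (S i) * hx -> INR j * hy < y < INR (S j) * hy ->
     H x y = P i j ((x - INR i * hx) / hx) ((y - INR j * hy) / hy)) ->
  @eq R (RInt (fun y => RInt (fun x => H x y) 0 (INR Nx * hx)) 0 (INR Ny * hy))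
    (sumN Ny (fun j => sumN Nx (fun i => hx * hy / 36 * simp2 (P i j)))).
Proof.
  intros Hx Hy HP1 HP2 HH.
  assert (Ed : forall k h, INR (S k) * h - INR k * h = h).
  { intros k h. rewrite S_INR. ring. }
  assert (Hlt : forall k h, 0 < h -> INR k * h < INR (S k) * h).
  { intros k h Hh. rewrite S_INR. lra. }
  assert (Inner : forall j, (j < Ny)%nat -> forall y, INR j * hy < y < INR (S j) * hy ->
     ex_RInt (fun x => H x y) 0 (INR Nx * hx) /\
     @eq R (RInt (fun x => H x y) 0 (INR Nx * hx))
       (sumN Nx (fun i => hx / 6 * simp1 (fun s => P i j s ((y - INR j * hy) / hy))))).
  { intros j Hj y Hyj.
    assert (Cell : forall i, (i < Nx)%nat ->
       ex_RInt (fun x => H x y) (INR i * hx) (INR (S i) * hx) /\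
       @eq R (RInt (fun x => H x y) (INR i * hx) (INR (S i) * hx))
         (hx / 6 * simp1 (fun s => P i j s ((y - INR j * hy) / hy)))).
    { intros i Hi.
      destruct (rint_quads (fun x => H x y) (fun s => P i j s ((y - INR j * hy) / hy))
                 (INR i * hx) (INR (S i) * hx) (Hlt i hx Hx) (HP1 _ _ _)) as [E1 E2].
      { intros x Hxx. rewrite Ed. apply HH; auto. }
      split; auto. rewrite E2, Ed. reflexivity. }
    destruct (rint_cells (fun x => H x y) hx Nx Hx) as [E1 E2].
    { intros; apply Cell; auto. }
    split; auto. rewrite E2. apply sumN_ext. intros i Hi. apply Cell; auto. }
  assert (Cellj : forall j, (j < Ny)%nat ->
     ex_RInt (fun y => RInt (fun x => H x y) 0 (INR Nx * hx)) (INR j * hy) (INR (S j) * hy) /\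
     @eq R (RInt (fun y => RInt (fun x => H x y) 0 (INR Nx * hx)) (INR j * hy) (INR (S j) * hy))
       (sumN Nx (fun i => hx * hy / 36 * simp2 (P i j)))).
  { intros j Hj.
    set (Qy := fun t => sumN Nx (fun i => hx / 6 * simp1 (fun s => P i j s t))).
    assert (HQ : quad Qy).
    { unfold Qy. apply quad_sumN. intros i. apply quad_scal. unfold simp1.
      apply quad_sum_aux. apply quad_sum_aux. apply HP2. apply quad_scal; apply HP2. apply HP2. }
    destruct (rint_quads (fun y => RInt (fun x => H x y) 0 (INR Nx * hx)) Qy
                 (INR j * hy) (INR (S j) * hy) (Hlt j hy Hy) HQ) as [E1 E2].
    { intros y Hyy. rewrite Ed. unfold Qy. apply Inner; auto. }
    split; auto. rewrite E2, Ed. unfold Qy.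
    rewrite <- (sumN_scal Nx 4), <- !sumN_plus, <- sumN_scal.
    apply sumN_ext. intros i Hi. unfold simp2, simp1. field. }
  destruct (rint_cells (fun y => RInt (fun x => H x y) 0 (INR Nx * hx)) hy Ny Hy) as [E1 E2].
  { intros; apply Cellj; auto. }
  rewrite E2. apply sumN_ext. intros j Hj. apply Cellj; auto.
Qed.

Definition bil (c00 c10 c01 c11 s t : R) : R :=
  c00 * (1 - s) * (1 - t) + c10 * s * (1 - t) + c01 * (1 - s) * t + c11 * s * t.

Definition node (Lx Ly : R) (Nx Ny : nat) (f : R -> R -> R) (i j : Z) : R :=
  f (IZR i * hx Lx Nx) (IZR j * hy Ly Ny).

Lemma hx_pos Lx Nx : 0 < Lx -> (0 < Nx)%nat -> 0 < hx Lx Nx.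
Proof. intros. unfold hx. apply Rdiv_lt_0_compat; auto. apply lt_0_INR; auto. Qed.
Lemma hy_pos Ly Ny : 0 < Ly -> (0 < Ny)%nat -> 0 < hy Ly Ny.
Proof. intros. unfold hy. apply Rdiv_lt_0_compat; auto. apply lt_0_INR; auto. Qed.
Lemma Lx_eq Lx Nx : (0 < Nx)%nat -> Lx = INR Nx * hx Lx Nx.
Proof. intros. unfold hx. field. apply not_0_INR; lia. Qed.
Lemma Ly_eq Ly Ny : (0 < Ny)%nat -> Ly = INR Ny * hy Ly Ny.
Proof. intros. unfold hy. field. apply not_0_INR; lia. Qed.

Lemma per_nat (g : R -> R) (L : R) : (forall x, g (x + L) = g x) ->
  forall n x, g (x + INR n * L) = g x.
Proof.
  intros Hg n. induction n; intros x. simpl. f_equal; ring.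
  rewrite S_INR. replace (x + (INR n + 1) * L) with ((x + INR n * L) + L) by ring.
  rewrite Hg. auto.
Qed.

Lemma per_Z (g : R -> R) (L : R) : (forall x, g (x + L) = g x) ->
  forall z x, g (x + IZR z * L) = g x.
Proof.
  intros Hg z x. destruct (Z_le_gt_dec 0 z) as [Hz|Hz].
  - rewrite <- (Z2Nat.id z) by lia. rewrite <- INR_IZR_INZ. apply per_nat; auto.
  - replace z with (- Z.of_nat (Z.to_nat (- z)))%Z by lia.
    rewrite opp_IZR, <- INR_IZR_INZ.
    rewrite <- (per_nat g L Hg (Z.to_nat (-z)) (x + - INR (Z.to_nat (- z)) * L)).
    f_equal; ring.
Qed.

Lemma cell_all (Lx Ly : R) (Nx Ny : nat) (f : R -> R -> R) :
  0 < Lx -> 0 < Ly -> (0 < Nx)%nat -> (0 < Ny)%nat -> in_Uh Lx Ly Nx Ny f ->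
  forall (i j : Z) x y,
    IZR i * hx Lx Nx <= x <= IZR (i + 1) * hx Lx Nx ->
    IZR j * hy Ly Ny <= y <= IZR (j + 1) * hy Ly Ny ->
    f x y = bil (node Lx Ly Nx Ny f i j) (node Lx Ly Nx Ny f (i + 1) j)
                (node Lx Ly Nx Ny f i (j + 1)) (node Lx Ly Nx Ny f (i + 1) (j + 1))
                ((x - IZR i * hx Lx Nx) / hx Lx Nx) ((y - IZR j * hy Ly Ny) / hy Ly Ny).
Proof.
  intros HLx HLy HNx HNy [Px [Py [_ Hcell]]] i j x y Hx Hy.
  set (H := hx Lx Nx) in *. set (K := hy Ly Ny) in *.
  assert (HH : 0 < H) by (apply hx_pos; auto).
  assert (HK : 0 < K) by (apply hy_pos; auto).
  assert (ELx : Lx = INR Nx * H) by (apply Lx_eq; auto).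
  assert (ELy : Ly = INR Ny * K) by (apply Ly_eq; auto).
  assert (PX : forall z x y, f (x + IZR z * Lx) y = f x y).
  { intros z x0 y0. apply (per_Z (fun t => f t y0) Lx); auto. }
  assert (PY : forall z x y, f x (y + IZR z * Ly) = f x y).
  { intros z x0 y0. apply (per_Z (fun t => f x0 t) Ly); auto. }
  set (NX := Z.of_nat Nx). set (NY := Z.of_nat Ny).
  assert (HNX : (0 < NX)%Z) by (unfold NX; lia).
  assert (HNY : (0 < NY)%Z) by (unfold NY; lia).
  set (q := (i / NX)%Z). set (r := (i mod NX)%Z).
  set (q' := (j / NY)%Z). set (r' := (j mod NY)%Z).
  assert (Ei : i = (q * NX + r)%Z) by (unfold q, r; rewrite Z.mul_comm; apply Z.div_mod; lia).
  assert (Ej : j = (q' * NY + r')%Z) by (unfold q', r'; rewrite Z.mul_comm; apply Z.div_mod; lia).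
  assert (Hr : (0 <= r < NX)%Z) by (unfold r; apply Z.mod_pos_bound; lia).
  assert (Hr' : (0 <= r' < NY)%Z) by (unfold r'; apply Z.mod_pos_bound; lia).
  assert (INX : IZR NX = INR Nx) by (unfold NX; rewrite <- INR_IZR_INZ; auto).
  assert (INY : IZR NY = INR Ny) by (unfold NY; rewrite <- INR_IZR_INZ; auto).
  assert (EXi : forall c, IZR (i + c) * H = IZR (r + c) * H + IZR q * Lx).
  { intros c. rewrite Ei. rewrite !plus_IZR, mult_IZR, INX, ELx. ring. }
  assert (EYj : forall c, IZR (j + c) * K = IZR (r' + c) * K + IZR q' * Ly).
  { intros c. rewrite Ej. rewrite !plus_IZR, mult_IZR, INY, ELy. ring. }
  assert (Enode : forall a b, node Lx Ly Nx Ny f (i + a) (j + b) =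
                              node Lx Ly Nx Ny f (r + a) (r' + b)).
  { intros a b. unfold node. fold H K. rewrite EXi, EYj, PX, PY. auto. }
  assert (Ei0 : IZR i * H = IZR r * H + IZR q * Lx).
  { rewrite <- (Z.add_0_r i). rewrite EXi. rewrite Z.add_0_r. auto. }
  assert (Ej0 : IZR j * K = IZR r' * K + IZR q' * Ly).
  { rewrite <- (Z.add_0_r j). rewrite EYj. rewrite Z.add_0_r. auto. }
  rewrite <- (Z.add_0_r i) at 1 3. rewrite <- (Z.add_0_r j) at 1 2.
  rewrite !Enode. rewrite !Z.add_0_r.
  set (x' := x - IZR q * Lx). set (y' := y - IZR q' * Ly).
  replace (f x y) with (f x' y').
  2:{ unfold x', y'. rewrite <- (PX q (x - IZR q * Lx)), <- (PY q' _ (y - IZR q' * Ly)).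
      f_equal; ring. }
  replace ((x - IZR i * H) / H) with ((x' - IZR r * H) / H) by (unfold x'; rewrite Ei0; field; lra).
  replace ((y - IZR j * K) / K) with ((y' - IZR r' * K) / K) by (unfold y'; rewrite Ej0; field; lra).
  assert (Hx' : IZR r * H <= x' <= IZR (r + 1) * H).
  { unfold x'. rewrite EXi in Hx. rewrite Ei0 in Hx. lra. }
  assert (Hy' : IZR r' * K <= y' <= IZR (r' + 1) * K).
  { unfold y'. rewrite EYj in Hy. rewrite Ej0 in Hy. lra. }
  clearbody x' y'. clear x y Hx Hy Enode EXi EYj Ei0 Ej0.
  set (rn := Z.to_nat r). set (rn' := Z.to_nat r').
  assert (Er : r = Z.of_nat rn) by (unfold rn; rewrite Z2Nat.id; lia).
  assert (Er' : r' = Z.of_nat rn') by (unfold rn'; rewrite Z2Nat.id; lia).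
  assert (Hrn : (rn < Nx)%nat) by (unfold NX in Hr; lia).
  assert (Hrn' : (rn' < Ny)%nat) by (unfold NY in Hr'; lia).
  destruct (Hcell rn rn' Hrn Hrn') as [a [b [c [d Hf]]]].
  assert (IR : IZR r = INR rn) by (rewrite Er, <- INR_IZR_INZ; auto).
  assert (IR' : IZR r' = INR rn') by (rewrite Er', <- INR_IZR_INZ; auto).
  assert (IR1 : IZR (r + 1) = INR (S rn)) by (rewrite plus_IZR, IR, S_INR; auto).
  assert (IR1' : IZR (r' + 1) = INR (S rn')) by (rewrite plus_IZR, IR', S_INR; auto).
  rewrite IR, IR1 in Hx'. rewrite IR', IR1' in Hy'.
  unfold node. fold H K. rewrite IR, IR1, IR', IR1'.
  rewrite S_INR in *.
  rewrite !Hf; try rewrite S_INR; try lra.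
  unfold bil. field. split; lra.
Qed.

Lemma locally_interval (x a b : R) (P : R -> Prop) : a < x < b ->
  (forall t, a < t < b -> P t) -> locally x P.
Proof.
  intros Hx HP.
  assert (He : 0 < Rmin (x - a) (b - x)) by (apply Rmin_pos; lra).
  exists (mkposreal _ He). intros t Ht.
  change (Rabs (t - x) < Rmin (x - a) (b - x)) in Ht.
  apply HP. apply Rabs_lt_between' in Ht.
  assert (Rmin (x - a) (b - x) <= x - a) by apply Rmin_l.
  assert (Rmin (x - a) (b - x) <= b - x) by apply Rmin_r. lra.
Qed.

Lemma derive_bil_s (c00 c10 c01 c11 x0 h t : R) (x : R) : h <> 0 ->
  Derive (fun z => bil c00 c10 c01 c11 ((z - x0) / h) t) x =
  ((c10 - c00) * (1 - t) + (c11 - c01) * t) / h.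
Proof.
  intros Hh. apply is_derive_unique. unfold bil. auto_derive. auto. field. auto.
Qed.

Lemma derive_bil_t (c00 c10 c01 c11 y0 k s : R) (y : R) : k <> 0 ->
  Derive (fun z => bil c00 c10 c01 c11 s ((z - y0) / k)) y =
  ((c01 - c00) * (1 - s) + (c11 - c10) * s) / k.
Proof.
  intros Hh. apply is_derive_unique. unfold bil. auto_derive. auto. field. auto.
Qed.

Section D.
Variables (Lx Ly : R) (Nx Ny : nat) (f : R -> R -> R).
Hypotheses (HLx : 0 < Lx) (HLy : 0 < Ly) (HNx : (0 < Nx)%nat) (HNy : (0 < Ny)%nat)
  (Hf : in_Uh Lx Ly Nx Ny f).

Let nd := node Lx Ly Nx Ny f.

Lemma dX_cell (i j : Z) x y :
  IZR i * hx Lx Nx < x < IZR (i + 1) * hx Lx Nx ->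
  IZR j * hy Ly Ny <= y <= IZR (j + 1) * hy Ly Ny ->
  dX f x y = bil ((nd (i+1) j - nd i j) / hx Lx Nx) ((nd (i+1) j - nd i j) / hx Lx Nx)
                 ((nd (i+1) (j+1) - nd i (j+1)) / hx Lx Nx) ((nd (i+1) (j+1) - nd i (j+1)) / hx Lx Nx)
                 ((x - IZR i * hx Lx Nx) / hx Lx Nx) ((y - IZR j * hy Ly Ny) / hy Ly Ny).
Proof.
  intros Hx Hy. assert (HH := hx_pos Lx Nx HLx HNx). unfold dX.
  rewrite (Derive_ext_loc _ (fun z => bil (nd i j) (nd (i + 1) j) (nd i (j + 1)) (nd (i + 1) (j + 1))
            ((z - IZR i * hx Lx Nx) / hx Lx Nx) ((y - IZR j * hy Ly Ny) / hy Ly Ny))).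
  - rewrite derive_bil_s by (apply Rgt_not_eq; exact HH). unfold bil. field. repeat split; apply Rgt_not_eq; try assumption. apply hy_pos; auto.
  - apply (locally_interval x _ _ _ Hx). intros t Ht.
    apply cell_all; auto; lra.
Qed.

Lemma dY_cell (i j : Z) x y :
  IZR i * hx Lx Nx <= x <= IZR (i + 1) * hx Lx Nx ->
  IZR j * hy Ly Ny < y < IZR (j + 1) * hy Ly Ny ->
  dY f x y = bil ((nd i (j+1) - nd i j) / hy Ly Ny) ((nd (i+1) (j+1) - nd (i+1) j) / hy Ly Ny)
                 ((nd i (j+1) - nd i j) / hy Ly Ny) ((nd (i+1) (j+1) - nd (i+1) j) / hy Ly Ny)
                 ((x - IZR i * hx Lx Nx) / hx Lx Nx) ((y - IZR j * hy Ly Ny) / hy Ly Ny).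
Proof.
  intros Hx Hy. assert (HK := hy_pos Ly Ny HLy HNy). unfold dY.
  rewrite (Derive_ext_loc _ (fun z => bil (nd i j) (nd (i + 1) j) (nd i (j + 1)) (nd (i + 1) (j + 1))
            ((x - IZR i * hx Lx Nx) / hx Lx Nx) ((z - IZR j * hy Ly Ny) / hy Ly Ny))).
  - rewrite derive_bil_t by (apply Rgt_not_eq; exact HK). unfold bil. field. repeat split; apply Rgt_not_eq; try assumption. apply hx_pos; auto.
  - apply (locally_interval y _ _ _ Hy). intros t Ht.
    apply cell_all; auto; lra.
Qed.

End D.

Lemma quad_bb_s a b c d a' b' c' d' t :
  quad (fun s => bil a b c d s t * bil a' b' c' d' s t).
Proof.
  eapply quad_ext; [|apply (quad_affmul (a*(1-t) + c*t) ((b-a)*(1-t) + (d-c)*t)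
                                         (a'*(1-t) + c'*t) ((b'-a')*(1-t) + (d'-c')*t))].
  intros s. unfold bil. ring.
Qed.

Lemma quad_bb_t a b c d a' b' c' d' s :
  quad (fun t => bil a b c d s t * bil a' b' c' d' s t).
Proof.
  eapply quad_ext; [|apply (quad_affmul (a*(1-s) + b*s) ((c-a)*(1-s) + (d-b)*s)
                                         (a'*(1-s) + b'*s) ((c'-a')*(1-s) + (d'-b')*s))].
  intros t. unfold bil. ring.
Qed.

Definition bu (u : Z -> Z -> R) (i j : Z) (s t : R) : R :=
  bil (u i j) (u (i+1)%Z j) (u i (j+1)%Z) (u (i+1)%Z (j+1)%Z) s t.
Definition bux (d : Z -> Z -> R) (i j : Z) (s t : R) : R :=
  bil (d i j) (d i j) (d i (j+1)%Z) (d i (j+1)%Z) s t.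
Definition buy (e : Z -> Z -> R) (i j : Z) (s t : R) : R :=
  bil (e i j) (e (i+1)%Z j) (e i j) (e (i+1)%Z j) s t.

Section I.
Variables (Lx Ly : R) (Nx Ny : nat).
Hypotheses (HLx : 0 < Lx) (HLy : 0 < Ly) (HNx : (0 < Nx)%nat) (HNy : (0 < Ny)%nat).
Let H := hx Lx Nx.
Let K := hy Ly Ny.

Definition rep (F : R -> R -> R) (U : Z -> Z -> R) : Prop :=
  forall i j : nat, (i < Nx)%nat -> (j < Ny)%nat -> forall x y,
    INR i * H <= x <= INR (S i) * H -> INR j * K <= y <= INR (S j) * K ->
    F x y = bu U (Z.of_nat i) (Z.of_nat j) ((x - INR i * H) / H) ((y - INR j * K) / K).

Lemma int_prod (F G : R -> R -> R) (U V : Z -> Z -> R) :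
  rep F U -> rep G V ->
  integO Lx Ly (fun x y => F x y * G x y) =
  sumN Ny (fun j => sumN Nx (fun i => H * K / 36 *
     simp2 (fun s t => bu U (Z.of_nat i) (Z.of_nat j) s t * bu V (Z.of_nat i) (Z.of_nat j) s t))).
Proof.
  intros HF HG. unfold integO.
  rewrite (Lx_eq Lx Nx), (Ly_eq Ly Ny) by auto. fold H K.
  apply (intrep (fun x y => F x y * G x y)
     (fun i j s t => bu U (Z.of_nat i) (Z.of_nat j) s t * bu V (Z.of_nat i) (Z.of_nat j) s t)).
  - apply hx_pos; auto.
  - apply hy_pos; auto.
  - intros; apply quad_bb_s.
  - intros; apply quad_bb_t.
  - intros i j Hi Hj x y Hx Hy. rewrite HF, HG; auto; lra.
Qed.

Lemma int_grad (phi a : R -> R -> R) :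
  in_Uh Lx Ly Nx Ny phi -> in_Uh Lx Ly Nx Ny a ->
  let P := node Lx Ly Nx Ny phi in let A := node Lx Ly Nx Ny a in
  let DXP := fun i j => (P (i+1)%Z j - P i j) / H in
  let DXA := fun i j => (A (i+1)%Z j - A i j) / H in
  let DYP := fun i j => (P i (j+1)%Z - P i j) / K in
  let DYA := fun i j => (A i (j+1)%Z - A i j) / K in
  integO Lx Ly (fun x y => dX phi x y * dX a x y + dY phi x y * dY a x y) =
  sumN Ny (fun j => sumN Nx (fun i => H * K / 36 *
     simp2 (fun s t => bux DXP (Z.of_nat i) (Z.of_nat j) s t * bux DXA (Z.of_nat i) (Z.of_nat j) s t
                     + buy DYP (Z.of_nat i) (Z.of_nat j) s t * buy DYA (Z.of_nat i) (Z.of_nat j) s t))).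
Proof.
  intros Hp Ha P A DXP DXA DYP DYA. unfold integO.
  rewrite (Lx_eq Lx Nx), (Ly_eq Ly Ny) by auto. fold H K.
  apply intrep.
  - apply hx_pos; auto.
  - apply hy_pos; auto.
  - intros; apply quad_sum_aux; apply quad_bb_s.
  - intros; apply quad_sum_aux; apply quad_bb_t.
  - intros i j Hi Hj x y Hx Hy.
    assert (I1 : IZR (Z.of_nat i) = INR i) by (rewrite <- INR_IZR_INZ; auto).
    assert (I2 : IZR (Z.of_nat i + 1) = INR (S i)) by (rewrite plus_IZR, I1, S_INR; auto).
    assert (J1 : IZR (Z.of_nat j) = INR j) by (rewrite <- INR_IZR_INZ; auto).
    assert (J2 : IZR (Z.of_nat j + 1) = INR (S j)) by (rewrite plus_IZR, J1, S_INR; auto).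
    rewrite (dX_cell Lx Ly Nx Ny phi HLx HLy HNx HNy Hp (Z.of_nat i) (Z.of_nat j)),
            (dX_cell Lx Ly Nx Ny a HLx HLy HNx HNy Ha (Z.of_nat i) (Z.of_nat j)),
            (dY_cell Lx Ly Nx Ny phi HLx HLy HNx HNy Hp (Z.of_nat i) (Z.of_nat j)),
            (dY_cell Lx Ly Nx Ny a HLx HLy HNx HNy Ha (Z.of_nat i) (Z.of_nat j));
      rewrite ?I1, ?I2, ?J1, ?J2; try (fold H K; lra).
    fold H K. reflexivity.
Qed.

End I.

Section R.
Variables (Lx Ly : R) (Nx Ny : nat).
Hypotheses (HLx : 0 < Lx) (HLy : 0 < Ly) (HNx : (0 < Nx)%nat) (HNy : (0 < Ny)%nat).
Let H := hx Lx Nx.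
Let K := hy Ly Ny.

Lemma rep_Uh f : in_Uh Lx Ly Nx Ny f -> rep Lx Ly Nx Ny f (node Lx Ly Nx Ny f).
Proof.
  intros Hf i j Hi Hj x y Hx Hy.
  assert (I1 : IZR (Z.of_nat i) = INR i) by (rewrite <- INR_IZR_INZ; auto).
  assert (I2 : IZR (Z.of_nat i + 1) = INR (S i)) by (rewrite plus_IZR, I1, S_INR; auto).
  assert (J1 : IZR (Z.of_nat j) = INR j) by (rewrite <- INR_IZR_INZ; auto).
  assert (J2 : IZR (Z.of_nat j + 1) = INR (S j)) by (rewrite plus_IZR, J1, S_INR; auto).
  unfold bu. rewrite (cell_all Lx Ly Nx Ny f HLx HLy HNx HNy Hf (Z.of_nat i) (Z.of_nat j));
    rewrite ?I1, ?I2, ?J1, ?J2; auto.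
Qed.

Definition lapn (P : Z -> Z -> R) (i j : Z) : R :=
  (P (i+1)%Z j - 2 * P i j + P (i-1)%Z j) / H ^ 2 +
  (P i (j+1)%Z - 2 * P i j + P i (j-1)%Z) / K ^ 2.

Lemma rep_lap f : in_Uh Lx Ly Nx Ny f ->
  rep Lx Ly Nx Ny (lap_h Lx Ly Nx Ny f) (lapn (node Lx Ly Nx Ny f)).
Proof.
  intros Hf i j Hi Hj x y Hx Hy.
  assert (HH : 0 < H) by (apply hx_pos; auto).
  assert (HK : 0 < K) by (apply hy_pos; auto).
  assert (I1 : IZR (Z.of_nat i) = INR i) by (rewrite <- INR_IZR_INZ; auto).
  assert (J1 : IZR (Z.of_nat j) = INR j) by (rewrite <- INR_IZR_INZ; auto).
  rewrite S_INR in Hx, Hy. fold H in Hx. fold K in Hy.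
  set (i0 := Z.of_nat i) in *. set (j0 := Z.of_nat j) in *.
  set (P := node Lx Ly Nx Ny f).
  assert (C : forall (a b : Z) x' y', IZR (i0 + a) * H <= x' <= IZR (i0 + a + 1) * H ->
     IZR (j0 + b) * K <= y' <= IZR (j0 + b + 1) * K ->
     f x' y' = bu P (i0 + a) (j0 + b) ((x' - IZR (i0 + a) * H) / H) ((y' - IZR (j0 + b) * K) / K)).
  { intros a b x' y' H1 H2. unfold bu, P. apply cell_all; auto. }
  unfold lap_h. fold H K.
  rewrite (C 1%Z 0%Z (x + H) y), (C 0%Z 0%Z x y), (C (-1)%Z 0%Z (x - H) y),
          (C 0%Z 1%Z x (y + K)), (C 0%Z (-1)%Z x (y - K));
    rewrite ?plus_IZR, ?I1, ?J1; try lra.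
  rewrite !Z.add_0_r. unfold bu, lapn.
  replace (i0 + -1 + 1)%Z with i0 by ring. replace (j0 + -1 + 1)%Z with j0 by ring.
  replace (i0 + 1 - 1)%Z with i0 by ring. replace (j0 + 1 - 1)%Z with j0 by ring.
  replace (i0 - 1)%Z with (i0 + -1)%Z by ring. replace (j0 - 1)%Z with (j0 + -1)%Z by ring.
  unfold bil. field. split; lra.
Qed.

End R.

Definition my (a0 a1 b0 b1 : R) : R := (2*a0*b0 + a0*b1 + a1*b0 + 2*a1*b1) / 6.

Lemma my_nonneg x y : 0 <= my x y x y.
Proof. unfold my. nra. Qed.

Section Disc.
Variables (Nx Ny : nat) (H K : R).
Hypotheses (HNx : (0 < Nx)%nat) (HNy : (0 < Ny)%nat) (HH : 0 < H) (HK : 0 < K).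
Let NX := Z.of_nat Nx.
Let NY := Z.of_nat Ny.

Definition per (u : Z -> Z -> R) : Prop :=
  (forall i j, u (i + NX)%Z j = u i j) /\ (forall i j, u i (j + NY)%Z = u i j).

Definition S (g : Z -> Z -> R) : R :=
  sumN Ny (fun j => sumN Nx (fun i => g (Z.of_nat i) (Z.of_nat j))).

Lemma per_shx u a : per u -> per (fun i j => u (i + a)%Z j).
Proof.
  intros [P1 P2]; split; intros i j.
  - replace (i + NX + a)%Z with (i + a + NX)%Z by ring. apply P1.
  - apply P2.
Qed.
Lemma per_shy u a : per u -> per (fun i j => u i (j + a)%Z).
Proof.
  intros [P1 P2]; split; intros i j.
  - apply P1.
  - replace (j + NY + a)%Z with (j + a + NY)%Z by ring. apply P2.
Qed.
Lemma per_map1 (g : R -> R) u : per u -> per (fun i j => g (u i j)).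
Proof. intros [P1 P2]; split; intros i j; [rewrite P1|rewrite P2]; auto. Qed.
Lemma per_map2 (g : R -> R -> R) u v : per u -> per v -> per (fun i j => g (u i j) (v i j)).
Proof.
  intros [P1 P2] [Q1 Q2]; split; intros i j; [rewrite P1, Q1|rewrite P2, Q2]; auto.
Qed.
Lemma per_map4 (g : R -> R -> R -> R -> R) u v w z : per u -> per v -> per w -> per z ->
  per (fun i j => g (u i j) (v i j) (w i j) (z i j)).
Proof.
  intros [P1 P2] [Q1 Q2] [R1 R2] [T1 T2]; split; intros i j;
    [rewrite P1, Q1, R1, T1|rewrite P2, Q2, R2, T2]; auto.
Qed.
Lemma per_const c : per (fun _ _ => c).
Proof. split; auto. Qed.

Lemma sumN_shift (h : Z -> R) n :
  sumN n (fun k => h (Z.of_nat k + 1)%Z) = sumN n (fun k => h (Z.of_nat k)) - h 0%Z + h (Z.of_nat n).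
Proof.
  induction n; simpl. ring. rewrite IHn. rewrite Zpos_P_of_succ_nat. unfold Z.succ. ring.
Qed.

Lemma S_ext F G : (forall i j, F i j = G i j) -> S F = S G.
Proof. intros E. unfold S. apply sumN_ext; intros. apply sumN_ext; intros. auto. Qed.

Lemma S_le F G : (forall i j, F i j <= G i j) -> S F <= S G.
Proof. intros E. unfold S. apply sumN_le; intros. apply sumN_le; intros. auto. Qed.

Lemma sumN_zero n : sumN n (fun _ => 0) = 0.
Proof. induction n; simpl; auto. rewrite IHn; ring. Qed.

Lemma S_nonneg F : (forall i j, 0 <= F i j) -> 0 <= S F.
Proof.
  intros HF. apply Rle_trans with (S (fun _ _ => 0)).
  - unfold S. rewrite (sumN_ext Ny _ (fun _ => 0)). rewrite sumN_zero; lra.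
    intros; apply sumN_zero.
  - apply S_le; auto.
Qed.

Lemma S_plus F G : S (fun i j => F i j + G i j) = S F + S G.
Proof.
  unfold S. rewrite <- sumN_plus. apply sumN_ext; intros. apply sumN_plus.
Qed.

Lemma S_scal c F : S (fun i j => c * F i j) = c * S F.
Proof.
  unfold S. rewrite <- sumN_scal. apply sumN_ext; intros. apply sumN_scal.
Qed.

Lemma S_shx g : per g -> S (fun i j => g (i + 1)%Z j) = S g.
Proof.
  intros [P1 _]. unfold S. apply sumN_ext; intros j _.
  rewrite (sumN_shift (fun i => g i (Z.of_nat j))).
  fold NX. rewrite <- (Z.add_0_l NX), P1. ring.
Qed.

Lemma S_shy g : per g -> S (fun i j => g i (j + 1)%Z) = S g.
Proof.
  intros [_ P2]. unfold S.
  rewrite (sumN_shift (fun j => sumN Nx (fun i => g (Z.of_nat i) j))).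
  fold NY. assert (E : sumN Nx (fun i => g (Z.of_nat i) NY) = sumN Nx (fun i => g (Z.of_nat i) 0%Z)).
  { apply sumN_ext; intros. rewrite <- (Z.add_0_l NY), P2. auto. }
  rewrite E. ring.
Qed.

Lemma S_tele F G h1 h2 : per h1 -> per h2 ->
  (forall i j, F i j = G i j + (h1 (i + 1)%Z j - h1 i j) + (h2 i (j + 1)%Z - h2 i j)) ->
  S F = S G.
Proof.
  intros P1 P2 E.
  rewrite (S_ext F (fun i j => G i j + ((h1 (i + 1)%Z j + (-1) * h1 i j)
                                   + (h2 i (j + 1)%Z + (-1) * h2 i j)))).
  2:{ intros; rewrite E; ring. }
  rewrite !S_plus, !S_scal, S_shx, S_shy by auto. ring.
Qed.

Definition DX (P : Z -> Z -> R) i j := (P (i + 1)%Z j - P i j) / H.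
Definition DY (P : Z -> Z -> R) i j := (P i (j + 1)%Z - P i j) / K.
Definition XX (P : Z -> Z -> R) i j := - (P (i + 1)%Z j - 2 * P i j + P (i - 1)%Z j) / H ^ 2.
Definition YY (P : Z -> Z -> R) i j := - (P i (j + 1)%Z - 2 * P i j + P i (j - 1)%Z) / K ^ 2.
Definition Ey (u v : Z -> Z -> R) := S (fun i j => my (u i j) (u i (j + 1)%Z) (v i j) (v i (j + 1)%Z)).
Definition Ex (u v : Z -> Z -> R) := S (fun i j => my (u i j) (u (i + 1)%Z j) (v i j) (v (i + 1)%Z j)).
Definition cellM (u v : Z -> Z -> R) i j := simp2 (fun s t => bu u i j s t * bu v i j s t) / 36.

Lemma per_DX P : per P -> per (DX P).
Proof. intros; unfold DX. apply (per_map2 (fun a b => (a - b) / H) (fun i j => P (i + 1)%Z j) P); auto. apply per_shx; auto. Qed.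
Lemma per_DY P : per P -> per (DY P).
Proof. intros; unfold DY. apply (per_map2 (fun a b => (a - b) / K) (fun i j => P i (j + 1)%Z) P); auto. apply per_shy; auto. Qed.

Lemma sbp_x P A : per P -> per A -> Ey (DX P) (DX A) = Ey (XX P) A.
Proof.
  intros PP PA. unfold Ey.
  apply (S_tele _ _ (fun i j => my (DX P (i - 1)%Z j) (DX P (i - 1)%Z (j + 1)%Z) (A i j) (A i (j + 1)%Z) / H)
                    (fun _ _ => 0)).
  - apply (per_map4 (fun a b c d => my a b c d / H) (fun i j => DX P (i - 1)%Z j)
             (fun i j => DX P (i - 1)%Z (j + 1)%Z) A (fun i j => A i (j + 1)%Z)).
    + apply (per_shx (DX P)). apply per_DX; auto.
    + apply (per_shx (fun i j => DX P i (j + 1)%Z)). apply per_shy. apply per_DX; auto.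
    + auto.
    + apply per_shy; auto.
  - apply per_const.
  - intros i j. cbv beta. replace (i + 1 - 1)%Z with i by ring.
    unfold DX, XX, my. replace (i - 1 + 1)%Z with i by ring. field. lra.
Qed.

Lemma sbp_y P A : per P -> per A -> Ex (DY P) (DY A) = Ex (YY P) A.
Proof.
  intros PP PA. unfold Ex.
  apply (S_tele _ _ (fun _ _ => 0)
     (fun i j => my (DY P i (j - 1)%Z) (DY P (i + 1)%Z (j - 1)%Z) (A i j) (A (i + 1)%Z j) / K)).
  - apply per_const.
  - apply (per_map4 (fun a b c d => my a b c d / K) (fun i j => DY P i (j - 1)%Z)
             (fun i j => DY P (i + 1)%Z (j - 1)%Z) A (fun i j => A (i + 1)%Z j)).
    + apply (per_shy (DY P)). apply per_DY; auto.
    + apply (per_shy (fun i j => DY P (i + 1)%Z j)). apply per_shx. apply per_DY; auto.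
    + auto.
    + apply per_shx; auto.
  - intros i j. cbv beta. replace (j + 1 - 1)%Z with j by ring.
    unfold DY, YY, my. replace (j - 1 + 1)%Z with j by ring. field. lra.
Qed.


Lemma per_map3 (g : R -> R -> R -> R) u v w : per u -> per v -> per w ->
  per (fun i j => g (u i j) (v i j) (w i j)).
Proof.
  intros [P1 P2] [Q1 Q2] [R1 R2]; split; intros i j;
    [rewrite P1, Q1, R1|rewrite P2, Q2, R2]; auto.
Qed.

Lemma per_XX P : per P -> per (XX P).
Proof.
  intros; unfold XX.
  apply (per_map3 (fun a b c => - (a - 2 * b + c) / H ^ 2) (fun i j => P (i + 1)%Z j) P (fun i j => P (i - 1)%Z j));
    auto; apply per_shx; auto.
Qed.
Lemma per_YY P : per P -> per (YY P).
Proof.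
  intros; unfold YY.
  apply (per_map3 (fun a b c => - (a - 2 * b + c) / K ^ 2) (fun i j => P i (j + 1)%Z) P (fun i j => P i (j - 1)%Z));
    auto; apply per_shy; auto.
Qed.

Lemma weak_pt d e d' e' i j :
  simp2 (fun s t => bux d i j s t * bux e i j s t + buy d' i j s t * buy e' i j s t) / 36 =
  my (d i j) (d i (j + 1)%Z) (e i j) (e i (j + 1)%Z) + my (d' i j) (d' (i + 1)%Z j) (e' i j) (e' (i + 1)%Z j).
Proof. unfold simp2, simp1, bux, buy, bil, my. field. Qed.

Lemma cauchy_pt p p1 a a1 : my p p1 a a1 <= 3 * my p p1 p p1 + my a a1 a a1 / 12.
Proof.
  assert (H0 := my_nonneg (3 * p - a / 2) (3 * p1 - a1 / 2)).
  unfold my in *. nra.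
Qed.

Lemma Ey_cauchy p a : Ey p a <= 3 * Ey p p + Ey a a / 12.
Proof.
  unfold Ey.
  apply Rle_trans with (S (fun i j => 3 * my (p i j) (p i (j + 1)%Z) (p i j) (p i (j + 1)%Z) + / 12 * my (a i j) (a i (j + 1)%Z) (a i j) (a i (j + 1)%Z))).
  - apply S_le. intros i j. assert (T := cauchy_pt (p i j) (p i (j + 1)%Z) (a i j) (a i (j + 1)%Z)). lra.
  - rewrite S_plus, !S_scal. lra.
Qed.

Lemma Ex_cauchy p a : Ex p a <= 3 * Ex p p + Ex a a / 12.
Proof.
  unfold Ex.
  apply Rle_trans with (S (fun i j => 3 * my (p i j) (p (i + 1)%Z j) (p i j) (p (i + 1)%Z j) + / 12 * my (a i j) (a (i + 1)%Z j) (a i j) (a (i + 1)%Z j))).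
  - apply S_le. intros i j. assert (T := cauchy_pt (p i j) (p (i + 1)%Z j) (a i j) (a (i + 1)%Z j)). lra.
  - rewrite S_plus, !S_scal. lra.
Qed.

Lemma Ey_l2 p : per p -> Ey p p <= S (fun i j => p i j ^ 2).
Proof.
  intros Pp. unfold Ey.
  apply Rle_trans with (S (fun i j => / 2 * p i j ^ 2 + / 2 * p i (j + 1)%Z ^ 2)).
  - apply S_le. intros i j. pose proof (pow2_ge_0 (p i j - p i (j+1)%Z)). unfold my. nra.
  - rewrite S_plus, !S_scal.
    rewrite (S_shy (fun i j => p i j ^ 2)) by (apply (per_map1 (fun x => x ^ 2)); auto). lra.
Qed.

Lemma Ex_l2 p : per p -> Ex p p <= S (fun i j => p i j ^ 2).
Proof.
  intros Pp. unfold Ex.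
  apply Rle_trans with (S (fun i j => / 2 * p i j ^ 2 + / 2 * p (i + 1)%Z j ^ 2)).
  - apply S_le. intros i j. pose proof (pow2_ge_0 (p i j - p (i+1)%Z j)). unfold my. nra.
  - rewrite S_plus, !S_scal.
    rewrite (S_shx (fun i j => p i j ^ 2)) by (apply (per_map1 (fun x => x ^ 2)); auto). lra.
Qed.

Lemma Ey_M A : per A -> Ey A A <= 3 * S (cellM A A).
Proof.
  intros PA. unfold Ey.
  apply Rle_trans with (S (fun i j => / 2 * my (A i j) (A i (j + 1)%Z) (A i j) (A i (j + 1)%Z)
                               + / 2 * my (A (i+1)%Z j) (A (i+1)%Z (j + 1)%Z) (A (i+1)%Z j) (A (i+1)%Z (j + 1)%Z))).
  - rewrite S_plus, !S_scal.
    rewrite (S_shx (fun i j => my (A i j) (A i (j + 1)%Z) (A i j) (A i (j + 1)%Z))). lra.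
    apply (per_map2 (fun x y => my x y x y)); auto. apply per_shy; auto.
  - rewrite <- S_scal. apply S_le. intros i j.
    assert (E : cellM A A i j = (my (A i j) (A i (j + 1)%Z) (A i j) (A i (j + 1)%Z)
                   + my (A (i+1)%Z j) (A (i+1)%Z (j + 1)%Z) (A (i+1)%Z j) (A (i+1)%Z (j + 1)%Z)) / 6
                   + my (A i j + A (i+1)%Z j) (A i (j+1)%Z + A (i+1)%Z (j+1)%Z)
                        (A i j + A (i+1)%Z j) (A i (j+1)%Z + A (i+1)%Z (j+1)%Z) / 6).
    { unfold cellM, simp2, simp1, bu, bil, my. field. }
    rewrite E. assert (T := my_nonneg (A i j + A (i+1)%Z j) (A i (j+1)%Z + A (i+1)%Z (j+1)%Z)). lra.
Qed.

Lemma Ex_M A : per A -> Ex A A <= 3 * S (cellM A A).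
Proof.
  intros PA. unfold Ex.
  apply Rle_trans with (S (fun i j => / 2 * my (A i j) (A (i + 1)%Z j) (A i j) (A (i + 1)%Z j)
                               + / 2 * my (A i (j+1)%Z) (A (i + 1)%Z (j+1)%Z) (A i (j+1)%Z) (A (i + 1)%Z (j+1)%Z))).
  - rewrite S_plus, !S_scal.
    rewrite (S_shy (fun i j => my (A i j) (A (i + 1)%Z j) (A i j) (A (i + 1)%Z j))). lra.
    apply (per_map2 (fun x y => my x y x y)); auto. apply per_shx; auto.
  - rewrite <- S_scal. apply S_le. intros i j.
    assert (E : cellM A A i j = (my (A i j) (A (i + 1)%Z j) (A i j) (A (i + 1)%Z j)
                   + my (A i (j+1)%Z) (A (i + 1)%Z (j+1)%Z) (A i (j+1)%Z) (A (i + 1)%Z (j+1)%Z)) / 6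
                   + my (A i j + A i (j+1)%Z) (A (i+1)%Z j + A (i+1)%Z (j+1)%Z)
                        (A i j + A i (j+1)%Z) (A (i+1)%Z j + A (i+1)%Z (j+1)%Z) / 6).
    { unfold cellM, simp2, simp1, bu, bil, my. field. }
    rewrite E. assert (T := my_nonneg (A i j + A i (j+1)%Z) (A (i+1)%Z j + A (i+1)%Z (j+1)%Z)). lra.
Qed.

Lemma W_M W : per W -> S (fun i j => W i j ^ 2) <= 9 * S (cellM W W).
Proof.
  intros PW.
  assert (P2 : per (fun i j => W i j ^ 2)) by (apply (per_map1 (fun x => x ^ 2)); auto).
  assert (E1 : S (fun i j => W (i+1)%Z j ^ 2) = S (fun i j => W i j ^ 2)) by (apply (S_shx (fun i j => W i j ^ 2)); auto).
  assert (E2 : S (fun i j => W i (j+1)%Z ^ 2) = S (fun i j => W i j ^ 2)) by (apply (S_shy (fun i j => W i j ^ 2)); auto).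
  assert (E3 : S (fun i j => W (i+1)%Z (j+1)%Z ^ 2) = S (fun i j => W i j ^ 2)).
  { rewrite (S_shx (fun i j => W i (j+1)%Z ^ 2)). auto.
    apply (per_shy (fun i j => W i j ^ 2)); auto. }
  apply Rle_trans with (S (fun i j => / 4 * (W i j ^ 2) + / 4 * (W (i+1)%Z j ^ 2) + / 4 * (W i (j+1)%Z ^ 2)
                                    + / 4 * (W (i+1)%Z (j+1)%Z ^ 2))).
  - rewrite !S_plus, !S_scal, E1, E2, E3. lra.
  - rewrite <- S_scal. apply S_le. intros i j.
    assert (E : cellM W W i j = (W i j ^ 2 + W (i+1)%Z j ^ 2 + W i (j+1)%Z ^ 2 + W (i+1)%Z (j+1)%Z ^ 2) / 36
                   + my (W i j + W (i+1)%Z j) (W i (j+1)%Z + W (i+1)%Z (j+1)%Z)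
                        (W i j + W (i+1)%Z j) (W i (j+1)%Z + W (i+1)%Z (j+1)%Z) / 6
                   + ((W i j + W i (j+1)%Z) ^ 2 + (W (i+1)%Z j + W (i+1)%Z (j+1)%Z) ^ 2) / 36).
    { unfold cellM, simp2, simp1, bu, bil, my. field. }
    rewrite E. assert (T := my_nonneg (W i j + W (i+1)%Z j) (W i (j+1)%Z + W (i+1)%Z (j+1)%Z)).
    pose proof (pow2_ge_0 (W i j + W i (j+1)%Z)).
    pose proof (pow2_ge_0 (W (i+1)%Z j + W (i+1)%Z (j+1)%Z)).
    lra.
Qed.

Lemma cross_pos P : per P -> 0 <= S (fun i j => XX P i j * YY P i j).
Proof.
  intros PP.
  rewrite (S_tele (fun i j => XX P i j * YY P i j)
     (fun i j => (P (i+1)%Z (j+1)%Z - P i (j+1)%Z - P (i+1)%Z j + P i j) ^ 2 / (H ^ 2 * K ^ 2))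
     (fun i j => (P i j - P (i-1)%Z j) * (P i (j+1)%Z - 2 * P i j + P i (j-1)%Z) / (H ^ 2 * K ^ 2))
     (fun i j => - ((P (i+1)%Z j - P i j) ^ 2 - (P (i+1)%Z j - P i j) * (P (i+1)%Z (j-1)%Z - P i (j-1)%Z))
                   / (H ^ 2 * K ^ 2))).
  - apply S_nonneg. intros i j. apply Rmult_le_pos. apply pow2_ge_0.
    apply Rlt_le, Rinv_0_lt_compat. apply Rmult_lt_0_compat; apply pow_lt; auto.
  - apply (per_map2 (fun x y => x * y / (H ^ 2 * K ^ 2)) (fun i j => P i j - P (i-1)%Z j)
             (fun i j => P i (j+1)%Z - 2 * P i j + P i (j-1)%Z)).
    + apply (per_map2 (fun x y => x - y) P (fun i j => P (i-1)%Z j)); auto. apply per_shx; auto.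
    + apply (per_map3 (fun x y z => x - 2 * y + z) (fun i j => P i (j+1)%Z) P (fun i j => P i (j-1)%Z)); auto;
        apply per_shy; auto.
  - apply (per_map2 (fun x y => - (x ^ 2 - x * y) / (H ^ 2 * K ^ 2)) (fun i j => P (i+1)%Z j - P i j)
             (fun i j => P (i+1)%Z (j-1)%Z - P i (j-1)%Z)).
    + apply (per_map2 (fun x y => x - y) (fun i j => P (i+1)%Z j) P); auto. apply per_shx; auto.
    + apply (per_map2 (fun x y => x - y) (fun i j => P (i+1)%Z (j-1)%Z) (fun i j => P i (j-1)%Z)).
      * apply (per_shy (fun i j => P (i+1)%Z j)). apply per_shx; auto.
      * apply per_shy; auto.
  - intros i j. cbv beta. replace (i + 1 - 1)%Z with i by ring. replace (j + 1 - 1)%Z with j by ring.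
    unfold XX, YY. field. lra.
Qed.

Lemma disc_main P A : per P -> per A ->
  S (cellM A A) = Ey (DX P) (DX A) + Ex (DY P) (DY A) ->
  S (cellM A A) <= 54 * S (cellM (fun i j => - (XX P i j + YY P i j)) (fun i j => - (XX P i j + YY P i j))).
Proof.
  intros PP PA E.
  rewrite sbp_x, sbp_y in E by auto.
  assert (C1 := Ey_cauchy (XX P) A). assert (C2 := Ex_cauchy (YY P) A).
  assert (L1 := Ey_l2 (XX P) (per_XX P PP)). assert (L2 := Ex_l2 (YY P) (per_YY P PP)).
  assert (M1 := Ey_M A PA). assert (M2 := Ex_M A PA).
  set (W := fun i j => - (XX P i j + YY P i j)).
  assert (PW : per W).
  { apply (per_map2 (fun x y => - (x + y))); [apply per_XX|apply per_YY]; auto. }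
  assert (WM := W_M W PW).
  assert (CP := cross_pos P PP).
  assert (EW : S (fun i j => W i j ^ 2) = S (fun i j => XX P i j ^ 2) + S (fun i j => YY P i j ^ 2)
                 + 2 * S (fun i j => XX P i j * YY P i j)).
  { rewrite <- S_scal, <- !S_plus. apply S_ext. intros i j. unfold W. ring. }
  lra.
Qed.

End Disc.

Lemma per_node Lx Ly Nx Ny f : 0 < Lx -> 0 < Ly -> (0 < Nx)%nat -> (0 < Ny)%nat ->
  in_Uh Lx Ly Nx Ny f -> per Nx Ny (node Lx Ly Nx Ny f).
Proof.
  intros HLx HLy HNx HNy [P1 [P2 _]]. split; intros i j; unfold node.
  - rewrite plus_IZR, <- INR_IZR_INZ. rewrite Rmult_plus_distr_r, <- (Lx_eq Lx Nx) by auto. apply P1.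
  - rewrite plus_IZR, <- INR_IZR_INZ. rewrite Rmult_plus_distr_r, <- (Ly_eq Ly Ny) by auto. apply P2.
Qed.

Lemma sum_to_S Nx Ny (c : R) (F : Z -> Z -> R) (G : nat -> nat -> R) :
  (forall i j, G i j = c * F (Z.of_nat i) (Z.of_nat j)) ->
  sumN Ny (fun j => sumN Nx (fun i => G i j)) = c * S Nx Ny F.
Proof.
  intros E. rewrite <- S_scal. unfold S. apply sumN_ext; intros. apply sumN_ext; intros. auto.
Qed.

Theorem lemmaA3 :
  forall (Lx Ly c1 C2 : R), 0 < Lx -> 0 < Ly -> 0 < c1 -> 0 < C2 ->
  exists C : R,
    forall (h : R) (Nx Ny : nat),
      0 < h < 1 -> (0 < Nx)%nat -> (0 < Ny)%nat ->
      c1 * h <= hx Lx Nx <= C2 * h ->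
      c1 * h <= hy Ly Ny <= C2 * h ->
      forall phi a : R -> R -> R,
        in_Uh Lx Ly Nx Ny phi ->
        is_Ah Lx Ly Nx Ny phi a ->
        L2normO Lx Ly a <= C * L2normO Lx Ly (lap_h Lx Ly Nx Ny phi).
Proof.
  intros Lx Ly c1 C2 HLx HLy _ _. exists 8.
  intros h Nx Ny _ HNx HNy _ _ phi a Hphi [Ha Hweak].
  set (H := hx Lx Nx). set (K := hy Ly Ny).
  assert (HH : 0 < H) by (apply hx_pos; auto).
  assert (HK : 0 < K) by (apply hy_pos; auto).
  set (P := node Lx Ly Nx Ny phi). set (A := node Lx Ly Nx Ny a).
  assert (PP : per Nx Ny P) by (apply per_node; auto).
  assert (PA : per Nx Ny A) by (apply per_node; auto).
  assert (IA : integO Lx Ly (fun x y => a x y * a x y) = H * K * S Nx Ny (cellM A A)).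
  { rewrite (int_prod Lx Ly Nx Ny HLx HLy HNx HNy a a A A) by (apply rep_Uh; auto).
    apply sum_to_S. intros i j. unfold cellM. fold H K. field. }
  assert (IG : integO Lx Ly (fun x y => dX phi x y * dX a x y + dY phi x y * dY a x y) =
               H * K * (Ey Nx Ny (DX H P) (DX H A) + Ex Nx Ny (DY K P) (DY K A))).
  { rewrite (int_grad Lx Ly Nx Ny HLx HLy HNx HNy phi a Hphi Ha).
    unfold Ey, Ex. rewrite <- S_plus.
    apply sum_to_S. intros i j. fold H K. fold P A.
    rewrite <- (weak_pt (DX H P) (DX H A) (DY K P) (DY K A)). unfold DX, DY. set (z := simp2 _). field. }
  set (W := fun i j => - (XX H P i j + YY K P i j)).
  assert (EW : lapn Lx Ly Nx Ny P = W).
  { apply functional_extensionality; intros i. apply functional_extensionality; intros j.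
    unfold lapn, W, XX, YY. fold H K. field. split; lra. }
  assert (IL : integO Lx Ly (fun x y => lap_h Lx Ly Nx Ny phi x y * lap_h Lx Ly Nx Ny phi x y)
               = H * K * S Nx Ny (cellM W W)).
  { rewrite (int_prod Lx Ly Nx Ny HLx HLy HNx HNy _ _ (lapn Lx Ly Nx Ny P) (lapn Lx Ly Nx Ny P))
      by (apply rep_lap; auto).
    rewrite EW. apply sum_to_S. intros i j. unfold cellM. fold H K. field. }
  assert (Eweak : S Nx Ny (cellM A A) = Ey Nx Ny (DX H P) (DX H A) + Ex Nx Ny (DY K P) (DY K A)).
  { assert (E := Hweak a Ha). rewrite IA, IG in E.
    apply (Rmult_eq_reg_l (H * K)); auto. apply Rgt_not_eq, Rmult_lt_0_compat; auto. }
  assert (D := disc_main Nx Ny H K HH HK P A PP PA Eweak). fold W in D.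
  assert (SA : 0 <= S Nx Ny (cellM A A)).
  { apply Rle_trans with (Ey Nx Ny A A / 3).
    - unfold Ey. apply Rmult_le_pos; [|lra]. apply S_nonneg. intros; apply my_nonneg.
    - assert (T := Ey_M Nx Ny A PA). lra. }
  unfold L2normO.
  replace (fun x y => a x y ^ 2) with (fun x y => a x y * a x y)
    by (apply functional_extensionality; intros; apply functional_extensionality; intros; ring).
  replace (fun x y => lap_h Lx Ly Nx Ny phi x y ^ 2)
    with (fun x y => lap_h Lx Ly Nx Ny phi x y * lap_h Lx Ly Nx Ny phi x y)
    by (apply functional_extensionality; intros; apply functional_extensionality; intros; ring).
  rewrite IA, IL.
  replace 8 with (sqrt 64) by (replace 64 with (8 * 8) by ring; rewrite sqrt_square; lra).
  rewrite <- sqrt_mult_alt by lra.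
  apply sqrt_le_1_alt.
  assert (0 < H * K) by (apply Rmult_lt_0_compat; auto).
  nra.
Qed.
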